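(* Let $B$ be a finite skew left brace and $X\subseteq B$ with $|X|\ge3$, $\lambda_a(X)=X$ and $\sigma_a(X)=X$ for all $a\in B$, such that $B$ is additively generated by $X$, the ideal $V$ generated by $\{x-y:x,y\in X\}$ is the smallest non-zero ideal of $B$, $B/V$ is a trivial skew left brace of cyclic type, and $V$ acts transitively on $X$ (the group $\{\sigma_a\lambda_b|_X:a,b\in V\}$ is transitive on $X$). Then $B^{(3)}=0$ if and only if $\lambda_x=\lambda_y$ for all $x,y\in X$. Moreover, if $B^{(3)}=0$ then $\lambda_v=\mathrm{id}$ for every $v\in V$.
   Context: A skew left brace $(B,+,\circ)$: $(B,+)$ and $(B,\circ)$ are groups with $a\circ(b+c)=a\circ b-a+a\circ c$; $\lambda_a(b)=-a+a\circ b$ (an automorphism of $(B,+)$ with $\lambda_{a\circ b}=\lambda_a\lambda_b$), $\sigma_a(b)=-a+b+a$, $a*b=-a+a\circ b-b$. An ideal is a normal subgroup $I$ of $(B,+)$ with $\lambda_a(I)\subseteq I$ for all $a$ and normal in $(B,\circ)$; smallest non-zero ideal = non-zero ideal contained in every non-zero ideal. $I*J$ is the additive subgroup generated by $\{i*j\}$; $B^{(2)}=B*B$, $B^{(3)}=B^{(2)}*B$. $B/V$ is trivial if its two operations coincide, and of cyclic type if its additive group is cyclic. *)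

(* Defs.v *)
From HB Require Import structures.
From mathcomp Require Import all_boot.
Set Implicit Arguments. Unset Strict Implicit. Unset Printing Implicit Defensive.

Record skew_brace (T : finType) := SkewBrace {
  add : T -> T -> T;
  zero : T;
  opp : T -> T;
  circ : T -> T -> T;
  one : T;
  cinv : T -> T;
  addA : forall a b c, add a (add b c) = add (add a b) c;
  add0r : forall a, add zero a = a;
  addr0 : forall a, add a zero = a;
  addNr : forall a, add (opp a) a = zero;
  addrN : forall a, add a (opp a) = zero;
  circA : forall a b c, circ a (circ b c) = circ (circ a b) c;
  circ1r : forall a, circ one a = a;
  circr1 : forall a, circ a one = a;
  circVr : forall a, circ (cinv a) a = one;
  circrV : forall a, circ a (cinv a) = one;
  brace_compat : forall a b c,
    circ a (add b c) = add (add (circ a b) (opp a)) (circ a c)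
}.

Section Brace.
Variables (T : finType) (B : skew_brace T).

Definition sub (a b : T) : T := add B a (opp B b).
Definition lambda (a b : T) : T := add B (opp B a) (circ B a b).
Definition sigma (a b : T) : T := add B (add B (opp B a) b) a.
Definition star (a b : T) : T := add B (add B (opp B a) (circ B a b)) (opp B b).
Fixpoint nmul (n : nat) (a : T) : T :=
  if n is k.+1 then add B a (nmul k a) else zero B.

Definition is_add_subgroup (H : {set T}) : bool :=
  [&& zero B \in H,
      [forall a, forall b, (a \in H) && (b \in H) ==> (add B a b \in H)] &
      [forall a, (a \in H) ==> (opp B a \in H)]].

Definition add_gen (S : {set T}) : {set T} :=
  [set x | [forall H : {set T}, is_add_subgroup H && (S \subset H) ==> (x \in H)]].

Definition is_ideal (I : {set T}) : bool :=
  [&& is_add_subgroup I,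
      [forall a, forall i, (i \in I) ==> (add B (add B a i) (opp B a) \in I)],
      [forall a, forall i, (i \in I) ==> (lambda a i \in I)] &
      [forall a, forall i, (i \in I) ==> (circ B (circ B a i) (cinv B a) \in I)]].

Definition ideal_gen (S : {set T}) : {set T} :=
  [set x | [forall I : {set T}, is_ideal I && (S \subset I) ==> (x \in I)]].

Definition smallest_nonzero_ideal (V : {set T}) : bool :=
  [&& is_ideal V, V != [set zero B] &
      [forall J : {set T}, is_ideal J && (J != [set zero B]) ==> (V \subset J)]].

(* B/V trivial: (a+b)+V = (a o b)+V for all a b *)
Definition quotient_trivial (V : {set T}) : bool :=
  [forall a, forall b, add B (opp B (add B a b)) (circ B a b) \in V].

Definition quotient_cyclic_type (V : {set T}) : Prop :=
  exists g : T, forall a : T, exists n : nat, add B (opp B (nmul n g)) a \in V.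

Definition B2 : {set T} := add_gen [set star a b | a in [set: T], b in [set: T]].
Definition B3 : {set T} := add_gen [set star c b | c in B2, b in [set: T]].

End Brace.

(* Main.v *)
Require Import Defs.
From mathcomp Require Import all_boot.
Set Implicit Arguments. Unset Strict Implicit. Unset Printing Implicit Defensive.

Section Alg.
Variables (T : finType) (B : skew_brace T).
Local Notation "a ⊕ b" := (add B a b) (at level 50, left associativity).
Local Notation "⊖ a" := (opp B a) (at level 35, right associativity).
Local Notation "a ⊙ b" := (circ B a b) (at level 40, left associativity).
Local Notation L := (lambda B).
Local Notation z0 := (zero B).

Lemma addKl a b : ⊖a ⊕ (a ⊕ b) = b.
Proof. by rewrite addA addNr add0r. Qed.
Lemma addNKl a b : a ⊕ (⊖a ⊕ b) = b.
Proof. by rewrite addA addrN add0r. Qed.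
Lemma addrK a b : a ⊕ b ⊕ ⊖b = a.
Proof. by rewrite -addA addrN addr0. Qed.
Lemma addrNK a b : a ⊕ ⊖b ⊕ b = a.
Proof. by rewrite -addA addNr addr0. Qed.
Lemma addIr a b c : b ⊕ a = c ⊕ a -> b = c.
Proof. by move=> h; rewrite -(addrK b a) h addrK. Qed.
Lemma opp_unique a b : a ⊕ b = z0 -> b = ⊖a.
Proof. by move=> h; rewrite -(addKl a b) h addr0. Qed.
Lemma oppK a : ⊖⊖a = a.
Proof. by symmetry; apply: opp_unique; rewrite addNr. Qed.
Lemma oppD a b : ⊖(a ⊕ b) = ⊖b ⊕ ⊖a.
Proof. by symmetry; apply: opp_unique; rewrite -addA (addA B b) addrN add0r addrN. Qed.
Lemma opp0 : ⊖z0 = z0.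
Proof. by symmetry; apply: opp_unique; rewrite add0r. Qed.

Lemma circ0 a : a ⊙ z0 = a.
Proof.
have h := brace_compat B a z0 z0; rewrite add0r in h.
have e : (a ⊙ z0 ⊕ ⊖a) = z0.
  by apply: (@addIr (a ⊙ z0)); rewrite add0r -h.
by rewrite -(addrNK (a ⊙ z0) a) e add0r.
Qed.
Lemma one_zero : Defs.one B = z0.
Proof. by rewrite -(circ0 (Defs.one B)) circ1r. Qed.

Lemma circE a b : a ⊙ b = a ⊕ L a b.
Proof. by rewrite /lambda addNKl. Qed.
Lemma L0 a : L a z0 = z0.
Proof. by rewrite /lambda circ0 addNr. Qed.
Lemma LD a b c : L a (b ⊕ c) = L a b ⊕ L a c.
Proof. by rewrite /lambda brace_compat !addA. Qed.
Lemma LN a b : L a (⊖b) = ⊖ L a b.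
Proof. by apply: opp_unique; rewrite -LD addrN L0. Qed.
Lemma Lcirc a b c : L (a ⊙ b) c = L a (L b c).
Proof.
rewrite {3}/lambda LD LN /lambda oppD oppK circA.
by rewrite -addA (addA B a) addrN add0r.
Qed.
Lemma L1 c : L z0 c = c.
Proof. by rewrite /lambda -!one_zero circ1r one_zero opp0 add0r. Qed.
Lemma LVK a c : L (cinv B a) (L a c) = c.
Proof. by rewrite -Lcirc circVr one_zero L1. Qed.
Lemma LKV a c : L a (L (cinv B a) c) = c.
Proof. by rewrite -Lcirc circrV one_zero L1. Qed.
Lemma addE a b : a ⊕ b = a ⊙ L (cinv B a) b.
Proof. by rewrite circE LKV. Qed.
Lemma starE a b : star B a b = L a b ⊕ ⊖b.
Proof. by []. Qed.

Lemma subgroupP (H : {set T}) : is_add_subgroup B H ->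
  [/\ z0 \in H, forall a b, a \in H -> b \in H -> a ⊕ b \in H &
      forall a, a \in H -> ⊖a \in H].
Proof.
case/and3P => H0 /forallP HD /forallP HN; split => //.
  by move=> a b Ha Hb; move: (HD a) => /forallP /(_ b) /implyP; apply; rewrite Ha Hb.
by move=> a Ha; move: (HN a) => /implyP; apply.
Qed.
Lemma mk_subgroup (H : {set T}) : z0 \in H -> (forall a b, a \in H -> b \in H -> a ⊕ b \in H) ->
  (forall a, a \in H -> ⊖a \in H) -> is_add_subgroup B H.
Proof.
move=> H0 HD HN; apply/and3P; split => //.
  apply/forallP => a; apply/forallP => b; apply/implyP => /andP [Ha Hb]; exact: HD.
by apply/forallP => a; apply/implyP; apply: HN.
Qed.
Lemma add_genP (S : {set T}) x : x \in add_gen B S ->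
  forall H : {set T}, is_add_subgroup B H -> S \subset H -> x \in H.
Proof. by rewrite inE => /forallP h H gH sH; move/implyP: (h H); apply; rewrite gH sH. Qed.
Lemma add_gen_sub (S : {set T}) : S \subset add_gen B S.
Proof.
apply/subsetP => x xS; rewrite inE; apply/forallP => H; apply/implyP => /andP [_ /subsetP]; apply; done.
Qed.
Lemma add_gen_group (S : {set T}) : is_add_subgroup B (add_gen B S).
Proof.
apply: mk_subgroup.
- rewrite inE; apply/forallP => H; apply/implyP => /andP [gH _]; by case/subgroupP: gH.
- move=> a b Ha Hb; rewrite inE; apply/forallP => H; apply/implyP => /andP [gH sH].
  case/subgroupP: (gH) => _ HD _; apply: HD; exact: add_genP gH sH.
- move=> a Ha; rewrite inE; apply/forallP => H; apply/implyP => /andP [gH sH].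
  case/subgroupP: (gH) => _ _ HN; apply: HN; exact: add_genP gH sH.
Qed.
Lemma add_gen_min (S H : {set T}) : is_add_subgroup B H -> S \subset H -> add_gen B S \subset H.
Proof. by move=> gH sH; apply/subsetP => x xS; apply: add_genP xS H gH sH. Qed.
Lemma ideal_gen_sub (S : {set T}) : S \subset ideal_gen B S.
Proof.
apply/subsetP => x xS; rewrite inE; apply/forallP => H; apply/implyP => /andP [_ /subsetP]; apply; done.
Qed.
Lemma add_gen_hom (S : {set T}) (f : T -> T) :
  (forall a b, f (a ⊕ b) = f a ⊕ f b) -> (forall a, f (⊖a) = ⊖ f a) -> f z0 = z0 ->
  (forall s, s \in S -> f s \in add_gen B S) ->
  forall x, x \in add_gen B S -> f x \in add_gen B S.
Proof.
move=> fD fN f0 fS x xS.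
case/subgroupP: (add_gen_group S) => G0 GD GN.
move: fS G0 GD GN; set G := add_gen B S => fS G0 GD GN; clearbody G.
have := add_genP xS (H := [set y | f y \in G]); rewrite inE; apply.
  apply: mk_subgroup; first by rewrite inE f0.
    by move=> a b; rewrite !inE => Ha Hb; rewrite fD; apply: GD.
  by move=> a; rewrite !inE fN; apply: GN.
by apply/subsetP => s sS; rewrite inE; apply: fS.
Qed.

Definition Qp v := forall d z, L (L d v) z = L v z.
Lemma Lplus u v : Qp v -> forall z, L (u ⊕ v) z = L u (L v z).
Proof. by move=> Qv z; rewrite (addE u v) Lcirc Qv. Qed.
Lemma Lopp u : Qp u -> forall z, L (⊖u) z = L (cinv B u) z.
Proof. by move=> Qu z; rewrite -{1}(LKV u z) -(Lplus (⊖u) Qu) addNr L1. Qed.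
Lemma Qstable v c : Qp v -> Qp (L c v).
Proof. by move=> Qv d z; rewrite -Lcirc !Qv. Qed.
Lemma Linv_congr u v : (forall z, L u z = L v z) ->
  forall z, L (cinv B u) z = L (cinv B v) z.
Proof. by move=> e z; rewrite -{1}(LKV v z) -e LVK. Qed.

Lemma star_in_B2 a b : star B a b \in B2 B.
Proof.
by rewrite /B2; apply: (subsetP (add_gen_sub _)); apply: imset2_f; rewrite inE.
Qed.
Lemma star_conj a b c : a ⊕ star B b c ⊕ ⊖a = ⊖ star B b a ⊕ star B b (a ⊕ c).
Proof. by rewrite /star brace_compat !oppD !oppK -!addA !addNKl !addKl. Qed.

Lemma B2_conj a u : u \in B2 B -> a ⊕ u ⊕ ⊖a \in B2 B.
Proof.
case/subgroupP: (add_gen_group [set star B a b | a in [set: T], b in [set: T]]) => G0 GD GN.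
apply: (add_gen_hom (f := fun x => a ⊕ x ⊕ ⊖a)).
- by move=> x y; rewrite -!addA !addKl.
- by move=> x; rewrite !oppD oppK -!addA.
- by rewrite addr0 addrN.
- move=> s /imset2P [b Hb c Hc ->]; rewrite star_conj; apply: GD; first apply: GN;
  exact: star_in_B2.
Qed.
Lemma B2_lam a u : u \in B2 B -> L a u \in B2 B.
Proof.
case/subgroupP: (add_gen_group [set star B a b | a in [set: T], b in [set: T]]) => G0 GD GN.
move=> uB; have -> : L a u = star B a u ⊕ u by rewrite starE addrNK.
by apply: GD => //; apply: star_in_B2.
Qed.
Lemma B2_ideal : (forall c b, c \in B2 B -> L c b = b) -> is_ideal B (B2 B).
Proof.
move=> kB2; apply/and4P; split.
- exact: add_gen_group.
- apply/forallP => a; apply/forallP => i; apply/implyP; exact: B2_conj.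
- apply/forallP => a; apply/forallP => i; apply/implyP; exact: B2_lam.
- apply/forallP => a; apply/forallP => i; apply/implyP => Hi.
  rewrite -circA (circE i) kB2 // brace_compat circrV one_zero addr0 (circE a i).
  by apply: B2_conj; apply: B2_lam.
Qed.

End Alg.

Theorem mainTheorem10 (T : finType) (B : skew_brace T) (X : {set T}) :
  3 <= #|X| ->
  (forall a : T, [set lambda B a x | x in X] = X) ->
  (forall a : T, [set sigma B a x | x in X] = X) ->
  add_gen B X = [set: T] ->
  smallest_nonzero_ideal B (ideal_gen B [set sub B x y | x in X, y in X]) ->
  quotient_trivial B (ideal_gen B [set sub B x y | x in X, y in X]) ->
  quotient_cyclic_type B (ideal_gen B [set sub B x y | x in X, y in X]) ->
  (forall x y, x \in X -> y \in X ->
     exists a b, [/\ a \in ideal_gen B [set sub B x y | x in X, y in X],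
                     b \in ideal_gen B [set sub B x y | x in X, y in X] &
                     sigma B a (lambda B b x) = y]) ->
  (B3 B = [set zero B] <->
     (forall x y, x \in X -> y \in X -> forall z, lambda B x z = lambda B y z))
  /\
  (B3 B = [set zero B] ->
     forall v, v \in ideal_gen B [set sub B x y | x in X, y in X] ->
       forall z, lambda B v z = z).
Proof.
move=> _ hlam _ hgen hsmall _ _ _.
set S := [set sub B x y | x in X, y in X] in hsmall *.
set V := ideal_gen B S in hsmall *.
have Xinv : forall a x, x \in X -> lambda B a x \in X.
  by move=> a x xX; rewrite -(hlam a); apply: imset_f.
have part2 : B3 B = [set zero B] -> forall v, v \in V -> forall z, lambda B v z = z.
  move=> h3.
  have kB2 : forall c b, c \in B2 B -> lambda B c b = b.
    move=> c b cB2.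
    have : star B c b \in B3 B.
      rewrite /B3; apply: (subsetP (add_gen_sub B _)); apply: imset2_f => //; rewrite inE.
    rewrite h3 inE starE => /eqP e.
    by rewrite -(addrNK B (lambda B c b) b) e add0r.
  have idl := B2_ideal kB2.
  case/and3P: hsmall => _ _ /forallP /(_ (B2 B)); rewrite idl /=.
  case: (boolP (B2 B == [set zero B])) => [/eqP e0 _ | ne /implyP /(_ isT) /subsetP sVB].
    move=> v _ z; have := star_in_B2 B v z; rewrite e0 inE starE => /eqP e.
    by rewrite -(addrNK B (lambda B v z) z) e add0r.
  by move=> v vV z; apply: kB2; apply: sVB.
split; last exact: part2.
split.
- move=> h3 x y xX yX z.
  have e := part2 h3 (sub B x y).
  have sV : sub B x y \in V.
    by apply: (subsetP (ideal_gen_sub B S)); apply: imset2_f.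
  have ex : x = circ B (sub B x y) y by rewrite circE (e sV) /sub addrNK.
  by rewrite {1}ex Lcirc (e sV).
- move=> hX.
  have Q : forall b, Qp B b.
    move=> b.
    pose Qs := [set b | [forall d, [forall z, lambda B (lambda B d b) z == lambda B b z]]].
    have QsP : forall b, b \in Qs <-> Qp B b.
      move=> c; rewrite inE; split.
        by move=> /forallP h d z; apply/eqP; move/forallP: (h d); apply.
      by move=> h; apply/forallP => d; apply/forallP => z; apply/eqP; apply: h.
    apply/QsP; have : b \in add_gen B X by rewrite hgen inE.
    move/add_genP; apply.
      apply: mk_subgroup.
      - by apply/QsP => d z; rewrite L0.
      - move=> a c /QsP Qa /QsP Qc; apply/QsP => d z.
        rewrite LD (Lplus _ (Qstable d Qc)) (Lplus _ Qc) Qa Qc //.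
      - move=> a /QsP Qa; apply/QsP => d z.
        rewrite LN (Lopp (Qstable d Qa)) (Lopp Qa).
        by apply: Linv_congr; apply: Qa.
    apply/subsetP => x xX; apply/QsP => d z; apply: hX => //; exact: Xinv.
  have LpA : forall u v z, lambda B (add B u v) z = lambda B u (lambda B v z).
    by move=> u v; apply: Lplus.
  have LoA : forall u z, lambda B (opp B u) z = lambda B (cinv B u) z.
    by move=> u; apply: Lopp.
  pose K := [set c | [forall z, lambda B c z == z]].
  have KP : forall c, c \in K <-> forall z, lambda B c z = z.
    move=> c; rewrite inE; split; first by move=> /forallP h z; apply/eqP.
    by move=> h; apply/forallP => z; apply/eqP.
  have B2K : B2 B \subset K.
    apply: add_gen_min.
      apply: mk_subgroup.
      - by apply/KP; apply: L1.
      - by move=> a c /KP Ka /KP Kc; apply/KP => z; rewrite LpA Kc Ka.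
      - by move=> a /KP Ka; apply/KP => z; rewrite LoA -{1}(Ka z) LVK.
    apply/subsetP => s /imset2P [a Ha b Hb ->]; apply/KP => z.
    by rewrite starE LpA LoA Q LKV.
  apply/eqP; rewrite eqEsubset; apply/andP; split.
    apply: add_gen_min.
      apply: mk_subgroup.
      - by rewrite inE.
      - by move=> a c; rewrite !inE => /eqP -> /eqP ->; rewrite add0r.
      - by move=> a; rewrite !inE => /eqP ->; rewrite opp0.
    apply/subsetP => s /imset2P [c b cB Hb ->].
    have /KP Kc := subsetP B2K c cB.
    by rewrite inE starE Kc addrN.
  rewrite sub1set; by case/subgroupP: (add_gen_group B [set star B c b | c in B2 B, b in [set: T]]).
Qed.
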